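(* Let $X$ be a finite positive definite metric space and let $x\in X$. Suppose there exists a probability measure $\nu$ on $X$ with $\nu(\{x\})=0$ such that $$\sum_{z\in X}e^{-d(y,z)}\nu(z)\le e^{-d(x,y)}\qquad\text{for all }y\in X.$$ Then $x$ does not belong to the support of the diversity-maximizing measure of $X$.
   Context: A finite metric space $(X,d)$ is positive definite if the matrix $Z=(e^{-d(x,y)})_{x,y\in X}$ is positive definite. The diversity-maximizing measure is the (unique, by positive definiteness) probability measure $\mu$ on $X$ minimizing $\sum_{x,y}e^{-d(x,y)}\mu(x)\mu(y)$; its support is $\{y:\mu(y)>0\}$. *)

(* Defs.v *)
From mathcomp Require Import all_boot all_order all_algebra.
From mathcomp Require Import reals.
From mathcomp Require Import sequences exp.
Set Implicit Arguments. Unset Strict Implicit. Unset Printing Implicit Defensive.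
Import Order.TTheory GRing.Theory Num.Theory.
Local Open Scope ring_scope.

Definition is_metric (R : realType) (X : finType) (d : X -> X -> R) : Prop :=
  [/\ forall x y, 0 <= d x y,
      forall x y, d x y = 0 <-> x = y,
      forall x y, d x y = d y x &
      forall x y z, d x z <= d x y + d y z].

Definition simmx (R : realType) (X : finType) (d : X -> X -> R) : 'M[R]_#|X| :=
  \matrix_(i, j) expR (- d (enum_val i) (enum_val j)).

Definition posdef_mx (R : realType) (n : nat) (A : 'M[R]_n) : Prop :=
  forall v : 'cV[R]_n, v != 0 -> 0 < (v^T *m A *m v) ord0 ord0.

Definition positive_definite_space (R : realType) (X : finType) (d : X -> X -> R) : Prop :=
  posdef_mx (simmx d).

Definition is_prob (R : realType) (X : finType) (mu : X -> R) : Prop :=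
  (forall x, 0 <= mu x) /\ \sum_(x : X) mu x = 1.

Definition qform (R : realType) (X : finType) (d : X -> X -> R) (mu : X -> R) : R :=
  \sum_(x : X) \sum_(y : X) expR (- d x y) * mu x * mu y.

(* mu is a (the, by positive definiteness) diversity-maximizing measure:
   a probability measure minimizing the quadratic form. *)
Definition diversity_maximizing (R : realType) (X : finType) (d : X -> X -> R)
    (mu : X -> R) : Prop :=
  is_prob mu /\ forall nu : X -> R, is_prob nu -> qform d mu <= qform d nu.

Definition msupport (R : realType) (X : finType) (mu : X -> R) : pred X :=
  fun y => 0 < mu y.

(* Main.v *)
Require Import Defs.
From mathcomp Require Import all_boot all_order all_algebra.
From mathcomp Require Import reals.
From mathcomp Require Import sequences exp.
From mathcomp Require Import ring lra.
Import Order.TTheory GRing.Theory Num.Theory.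
Local Open Scope ring_scope.

Lemma sumX_ord (R : realType) (X : finType) (F : X -> R) :
  \sum_(y : X) F y = \sum_(i < #|X|) F (enum_val i).
Proof.
rewrite (reindex (@enum_val X X)) //.
exists (@enum_rank X) => i _; [exact: enum_valK | exact: enum_rankK].
Qed.

Lemma posdef_link (R : realType) (X : finType) (d : X -> X -> R)
  (hpd : positive_definite_space d) (w : X -> R) (x : X) : w x != 0 ->
  0 < \sum_(y : X) \sum_(z : X) expR (- d y z) * w y * w z.
Proof.
move=> wx.
pose v : 'cV[R]_#|X| := \col_i w (enum_val i).
have vn0 : v != 0.
  apply/negP=> /eqP v0; move: wx; have := congr1 (fun M : 'cV[R]_#|X| => M (enum_rank x) ord0) v0.
  by rewrite !mxE enum_rankK => ->; rewrite eqxx.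
have := hpd v vn0.
suff -> : (v^T *m simmx d *m v) ord0 ord0 = \sum_(y : X) \sum_(z : X) expR (- d y z) * w y * w z by [].
rewrite mxE [RHS]exchange_big /= [RHS]sumX_ord.
apply: eq_bigr => j _; rewrite mxE [RHS]sumX_ord mulr_suml; apply: eq_bigr => i _.
by rewrite !mxE (mulrC (w _)).
Qed.


Lemma sum_ind (R : realType) (X : finType) (x : X) (F : X -> R) :
  \sum_(y : X) (y == x)%:R * F y = F x.
Proof.
rewrite (bigD1 x) //= eqxx mul1r big1 ?addr0 // => y /negbTE ->; by rewrite mul0r.
Qed.

Lemma Bexp (R : realType) (X : finType) (K : X -> X -> R) (f g : X -> R) :
  \sum_(y : X) \sum_(z : X) K y z * f y * g z = \sum_y f y * \sum_z K y z * g z.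
Proof.
apply: eq_bigr => y _; rewrite mulr_sumr; apply: eq_bigr => z _.
by rewrite mulrA (mulrC (f y)).
Qed.

Lemma Bsym (R : realType) (X : finType) (K : X -> X -> R) (f g : X -> R) :
  (forall y z, K y z = K z y) ->
  \sum_(y : X) \sum_(z : X) K y z * f y * g z = \sum_(y : X) \sum_(z : X) K y z * g y * f z.
Proof.
move=> Ks; rewrite exchange_big; apply: eq_bigr => y _; apply: eq_bigr => z _.
by rewrite Ks -!mulrA (mulrC (f z)).
Qed.

Lemma expand (R : realType) (X : finType) (K : X -> X -> R) (f g : X -> R) (t : R) :
  (forall y z, K y z = K z y) ->
  \sum_(y : X) \sum_(z : X) K y z * (f y + t * g y) * (f z + t * g z) =
  \sum_(y : X) \sum_(z : X) K y z * f y * f z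
  + 2 * t * (\sum_(y : X) \sum_(z : X) K y z * f y * g z)
  + t ^+ 2 * (\sum_(y : X) \sum_(z : X) K y z * g y * g z).
Proof.
move=> Ks.
transitivity (\sum_(y : X) \sum_(z : X) (K y z * f y * f z + t * (K y z * f y * g z)
   + t * (K y z * g y * f z) + t ^+ 2 * (K y z * g y * g z))).
  by apply: eq_bigr => y _; apply: eq_bigr => z _; ring.
under eq_bigr do rewrite !big_split -!mulr_sumr.
rewrite !big_split -!mulr_sumr /= (@Bsym _ _ _ g f Ks).
ring.
Qed.

Theorem proposition4p4 (R : realType) (X : finType) (d : X -> X -> R)
  (hd : is_metric d) (hpd : positive_definite_space d) (x : X) :
  (exists nu : X -> R, [/\ is_prob nu, nu x = 0 &
     forall y : X, \sum_(z : X) expR (- d y z) * nu z <= expR (- d x y)]) ->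
  forall mu : X -> R, diversity_maximizing d mu -> x \notin msupport mu.
Proof.
case=> nu [[nu0 nu1] nux hnu] mu [[mu0 mu1] mumin].
apply/negP; rewrite unfold_in /msupport => mux.
case: hd => _ d0 dsym _.
pose K y z := expR (- d y z).
have Ks : forall y z, K y z = K z y by move=> y z; rewrite /K dsym.
pose w z := nu z - (z == x)%:R.
pose Zw y := \sum_(z : X) K y z * w z.
have hZw : forall y, Zw y <= 0.
  move=> y; rewrite /Zw /w.
  under eq_bigr do rewrite mulrBr.
  rewrite sumrB.
  under [X in _ - X]eq_bigr do rewrite mulrC.
  rewrite sum_ind subr_le0 Ks; exact: hnu.
have wx : w x != 0 by rewrite /w nux eqxx sub0r oppr_eq0 oner_eq0.
have cpos := @posdef_link _ _ _ hpd w x wx.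
set c := \sum_(y : X) \sum_(z : X) _ in cpos.
pose b := \sum_(y : X) \sum_(z : X) K y z * mu y * w z.
have sw : \sum_(z : X) w z = 0.
  by rewrite /w sumrB nu1; under eq_bigr do rewrite -[_%:R]mulr1; rewrite sum_ind subrr.
have hmin : forall t, 0 < t -> t <= mu x -> 0 <= 2 * b + t * c.
  move=> t t0 ta.
  have pr : is_prob (fun z => mu z + t * w z).
    split.
      move=> z; rewrite /w; case: eqVneq => [->|_].
        by rewrite nux sub0r mulrN1 subr_ge0.
      by rewrite subr0; apply: addr_ge0 => //; apply: mulr_ge0 => //; exact: ltW.
    by rewrite big_split /= -mulr_sumr sw mulr0 addr0.
  have := mumin _ pr; rewrite /qform expand // -/c -/b.
  move=> h.
  have : 0 <= t * (2 * b + t * c).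
    have -> : t * (2 * b + t * c) = 2 * t * b + t ^+ 2 * c by ring.
    lra.
  by rewrite pmulr_rge0.
have b0 : 0 <= b.
  rewrite leNgt; apply/negP => bneg.
  pose t := Num.min (mu x) (- b / c).
  have t0 : 0 < t by rewrite lt_min mux divr_gt0 // oppr_gt0.
  have ta : t <= mu x by rewrite ge_min lexx.
  have tc : t * c <= - b.
    by rewrite -ler_pdivlMr // ge_min lexx orbT.
  have := hmin t t0 ta; lra.
have Zx : 0 <= Zw x.
  have : b <= mu x * Zw x.
    rewrite /b Bexp (bigD1 x) //= -/(Zw x) gerDl.
    apply: sumr_le0 => y _; apply: mulr_ge0_le0 => //; exact: hZw.
  move=> h; have : 0 <= mu x * Zw x by apply: le_trans h.
  by rewrite pmulr_rge0.
have : c <= - Zw x.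
  rewrite /c (@Bexp _ _ K).
  have -> : \sum_(y : X) w y * \sum_(z : X) K y z * w z = \sum_y w y * Zw y by [].
  rewrite /w; under eq_bigr do rewrite mulrBl.
  rewrite sumrB sum_ind -[X in _ <= X]add0r lerD2r.
  apply: sumr_le0 => y _; apply: mulr_ge0_le0 => //; exact: hZw.
have := hZw x; lra.
Qed.
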